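(* Let $h>0$, $\beta>0$, $k\in\mathbb{N}$, $f(x)=hx^k$, and $\mathcal{B}(\alpha)=f(\alpha)+\sqrt2\beta\sqrt{1-\alpha^2}$ for $\alpha\in[-1,1]$. When $k=1$, for all $\beta>0$, $\sup_{\alpha\in[-1,1]}\mathcal{B}(\alpha)=\sqrt{h^2+2\beta^2}$ and the unique local and global maximizer of $\mathcal{B}$ is $\alpha=\frac{h}{\sqrt{h^2+2\beta^2}}$. When $k=2$ and $\beta\ge\beta_c(2,h)$, the unique local and global maximizer of $\mathcal{B}$ is $\alpha=0$; when $k=2$ and $\beta<\beta_c(2,h)$, $\sup_{\alpha\in[-1,1]}\mathcal{B}(\alpha)=h+\frac{\beta^2}{2h}$ and the unique local and global maximizers are $\alpha=\pm\sqrt{1-\frac{\beta^2}{2h^2}}$. When $k\ge3$ and $\beta\ge\tilde\beta_c(k,h)$, the unique local and global maximizer of $\mathcal{B}$ is $\alpha=0$. When $k\ge3$ and $\beta<\tilde\beta_c(k,h)$, let $\hat\alpha$ be the largest solution of $$\alpha^{2(k-2)}(1-\alpha^2)=2\left(\frac{\beta}{hk}\right)^2,$$ which is the unique solution of this equation in $\big(\sqrt{\tfrac{k-2}{k-1}},1\big)$. Then $\alpha=0$ and $\alpha=\hat\alpha$ are the only local maximizers of $\mathcal{B}$ in $[0,1]$; if $\beta>\beta_c(k,h)$ the global maximizer in $[0,1]$ is $\alpha=0$, if $\beta=\beta_c(k,h)$ both $0$ and $\hat\alpha$ are global maximizers, and if $\beta<\beta_c(k,h)$ the global maximizer in $[0,1]$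 is $\hat\alpha$. When $k\ge4$ is even, $-\hat\alpha$ is also a local (resp. global) maximizer whenever $\hat\alpha$ is, and it is the unique such one in $[-1,0)$; when $k\ge3$ is odd, $\mathcal{B}$ has no local maximizers in $[-1,0)$.
   Context: Critical values: $\beta_c(1,h)=\infty$, $\beta_c(2,h)=\sqrt2h$, and for $k\ge3$, $\beta_c(k,h)=\frac{h}{\sqrt2}\frac{k-1}{k-2}\left(1-\frac{1}{(k-1)^2}\right)^{k/2}$; for $k\ge3$, $\tilde\beta_c(k,h)=\frac{hk}{\sqrt2}\frac{(k-2)^{(k-2)/2}}{(k-1)^{(k-1)/2}}$ (which exceeds $\beta_c(k,h)$). *)

(* Defs.v *)
From Stdlib Require Import Reals.
Open Scope R_scope.

Definition Bfun (h beta : R) (k : nat) (a : R) : R :=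
  h * a ^ k + sqrt 2 * beta * sqrt (1 - a ^ 2).

Definition inI (a : R) : Prop := -1 <= a <= 1.

Definition is_global_max (f : R -> R) (a : R) : Prop :=
  inI a /\ forall y, inI y -> f y <= f a.

Definition is_local_max (f : R -> R) (a : R) : Prop :=
  inI a /\ exists eps, 0 < eps /\
    forall y, inI y -> Rabs (y - a) < eps -> f y <= f a.

Definition sup_on_I (f : R -> R) (s : R) : Prop :=
  is_lub (fun v => exists a, inI a /\ v = f a) s.

Definition beta_c2 (h : R) : R := sqrt 2 * h.

Definition beta_c (k : nat) (h : R) : R :=
  h / sqrt 2 * ((INR k - 1) / (INR k - 2)) *
  Rpower (1 - 1 / (INR k - 1) ^ 2) (INR k / 2).

Definition beta_tc (k : nat) (h : R) : R :=
  h * INR k / sqrt 2 *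
  (Rpower (INR k - 2) ((INR k - 2) / 2) / Rpower (INR k - 1) ((INR k - 1) / 2)).

Definition crit_eq (h beta : R) (k : nat) (a : R) : Prop :=
  a ^ (2 * (k - 2)) * (1 - a ^ 2) = 2 * (beta / (h * INR k)) ^ 2.

(* Main.v *)
Require Import Defs.
From Stdlib Require Import Reals.
Open Scope R_scope.
From Coquelicot Require Import Coquelicot.
From Stdlib Require Import Lra Lia.

Definition Dfun (h beta : R) (k : nat) (x : R) : R :=
  h * INR k * x ^ (k - 1) - sqrt 2 * beta * x / sqrt (1 - x ^ 2).

Lemma B_deriv h beta k x : -1 < x < 1 -> derivable_pt_lim (Bfun h beta k) x (Dfun h beta k x).
Proof.
  intros Hx. apply is_derive_Reals. unfold Bfun, Dfun.
  auto_derive.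
  - nra.
  - rewrite Nat.sub_1_r. assert (0 < sqrt (1 - x^2)) by (apply sqrt_lt_R0; nra).
    replace (1 + - (x * (x * 1))) with (1 - x^2) by ring. field. lra.
Qed.

Lemma sqrt_cont x : continuity_pt sqrt x.
Proof. apply continuity_pt_filterlim. apply continuous_sqrt. Qed.

Lemma B_cont h beta k x : continuity_pt (Bfun h beta k) x.
Proof.
  unfold Bfun.
  apply (continuity_pt_plus (fun x => h*x^k) (fun x => sqrt 2*beta*sqrt(1-x^2))).
  - apply derivable_continuous_pt. reg.
  - apply (continuity_pt_mult (fun _ => sqrt 2 * beta) (fun x => sqrt (1 - x^2))).
    + apply continuity_pt_const. intros a b; reflexivity.
    + apply (continuity_pt_comp (fun x => 1 - x^2) sqrt).
      * apply derivable_continuous_pt. reg.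
      * apply sqrt_cont.
Qed.

Lemma mvt_gen f df p q : (forall x, p<x<q -> derivable_pt_lim f x (df x)) ->
  (forall x, p<=x<=q -> continuity_pt f x) ->
  forall x y, p<=x -> x<y -> y<=q -> exists c, p < c < q /\ f y - f x = df c * (y - x).
Proof.
  intros Hd Hc x y Hx Hxy Hy.
  destruct (MVT f id x y (fun c P => exist (fun l => derivable_pt_abs f c l) (df c) (Hd c (conj (Rle_lt_trans _ _ _ Hx (proj1 P)) (Rlt_le_trans _ _ _ (proj2 P) Hy))))
    (fun c _ => derivable_pt_id c) Hxy) as [c [P Heq]].
  - intros c Pc. apply Hc. lra.
  - intros c Pc. apply derivable_continuous_pt. apply derivable_pt_id.
  - exists c. split; [lra|]. cbn in Heq. rewrite derive_pt_id in Heq. unfold id in Heq. lra.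
Qed.

Definition sincr (f : R -> R) p q := forall x y, p <= x -> x < y -> y <= q -> f x < f y.
Definition sdecr (f : R -> R) p q := forall x y, p <= x -> x < y -> y <= q -> f y < f x.

Lemma incr_gen f df p q : (forall x, p<x<q -> derivable_pt_lim f x (df x)) ->
  (forall x, p<=x<=q -> continuity_pt f x) -> (forall x, p<x<q -> 0 < df x) -> sincr f p q.
Proof.
  intros Hd Hc Hp x y Hx Hxy Hy. destruct (mvt_gen f df p q Hd Hc x y Hx Hxy Hy) as [c [Pc E]].
  specialize (Hp c Pc). nra.
Qed.

Lemma decr_gen f df p q : (forall x, p<x<q -> derivable_pt_lim f x (df x)) ->
  (forall x, p<=x<=q -> continuity_pt f x) -> (forall x, p<x<q -> df x < 0) -> sdecr f p q.
Proof.
  intros Hd Hc Hp x y Hx Hxy Hy. destruct (mvt_gen f df p q Hd Hc x y Hx Hxy Hy) as [c [Pc E]].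
  specialize (Hp c Pc). nra.
Qed.

Lemma B_incr h beta k p q : -1 <= p -> q <= 1 ->
  (forall x, p < x < q -> 0 < Dfun h beta k x) -> sincr (Bfun h beta k) p q.
Proof.
  intros Hp Hq H. apply (incr_gen _ (Dfun h beta k)); auto.
  - intros x Hx. apply B_deriv. lra.
  - intros; apply B_cont.
Qed.

Lemma B_decr h beta k p q : -1 <= p -> q <= 1 ->
  (forall x, p < x < q -> Dfun h beta k x < 0) -> sdecr (Bfun h beta k) p q.
Proof.
  intros Hp Hq H. apply (decr_gen _ (Dfun h beta k)); auto.
  - intros x Hx. apply B_deriv. lra.
  - intros; apply B_cont.
Qed.

Lemma sincr_join f p m q : sincr f p m -> sincr f m q -> sincr f p q.
Proof.
  intros H1 H2 x y Hx Hxy Hy.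
  destruct (Rle_lt_dec y m). { apply H1; lra. }
  destruct (Rle_lt_dec m x). { apply H2; lra. }
  apply Rlt_trans with (f m); [apply H1 | apply H2]; lra.
Qed.

Lemma sdecr_join f p m q : sdecr f p m -> sdecr f m q -> sdecr f p q.
Proof.
  intros H1 H2 x y Hx Hxy Hy.
  destruct (Rle_lt_dec y m). { apply H1; lra. }
  destruct (Rle_lt_dec m x). { apply H2; lra. }
  apply Rlt_trans with (f m); [apply H2 | apply H1]; lra.
Qed.

Lemma notmax_incr f a q : -1 <= a -> a < q -> q <= 1 -> sincr f a q -> ~ is_local_max f a.
Proof.
  intros H1 H2 H3 Hi [_ [eps [He Hl]]].
  set (y := a + Rmin eps (q - a) / 2).
  assert (Hm1 : 0 < Rmin eps (q - a)) by (apply Rmin_pos; lra).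
  assert (Hm2 : Rmin eps (q - a) <= eps) by apply Rmin_l.
  assert (Hm3 : Rmin eps (q - a) <= q - a) by apply Rmin_r.
  assert (f y <= f a). { apply Hl. unfold inI, y; lra. unfold y. rewrite Rabs_right; lra. }
  assert (f a < f y) by (apply Hi; unfold y; lra). lra.
Qed.

Lemma notmax_decr f p a : -1 <= p -> p < a -> a <= 1 -> sdecr f p a -> ~ is_local_max f a.
Proof.
  intros H1 H2 H3 Hi [_ [eps [He Hl]]].
  set (y := a - Rmin eps (a - p) / 2).
  assert (Hm1 : 0 < Rmin eps (a - p)) by (apply Rmin_pos; lra).
  assert (Hm2 : Rmin eps (a - p) <= eps) by apply Rmin_l.
  assert (Hm3 : Rmin eps (a - p) <= a - p) by apply Rmin_r.
  assert (f y <= f a). { apply Hl. unfold inI, y; lra. unfold y. rewrite Rabs_left; lra. }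
  assert (f a < f y) by (apply Hi; unfold y; lra). lra.
Qed.

Lemma global_local f a : is_global_max f a -> is_local_max f a.
Proof. intros [H1 H2]. split; auto. exists 1. split; [lra|]. intros; auto. Qed.

Lemma global_sup f a : is_global_max f a -> sup_on_I f (f a).
Proof.
  intros [H1 H2]. split.
  - intros v [y [Hy ->]]. auto.
  - intros b Hb. apply Hb. exists a; auto.
Qed.

Lemma sym_local f a : (forall y, f (- y) = f y) -> is_local_max f a -> is_local_max f (- a).
Proof.
  intros Hs [[H1 H2] [eps [He Hl]]]. split. unfold inI; lra.
  exists eps. split; auto. intros y Hy Hya.
  replace (f (- a)) with (f a) by (symmetry; apply Hs).
  replace (f y) with (f (- y)) by apply Hs.
  apply Hl. unfold inI in *; lra.
  replace (-y - a) with (- (y - - a)) by ring. rewrite Rabs_Ropp. auto.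
Qed.

Lemma sym_global f a : (forall y, f (- y) = f y) -> is_global_max f a -> is_global_max f (- a).
Proof.
  intros Hs [[H1 H2] Hl]. split. unfold inI; lra.
  intros y Hy. rewrite Hs. apply Hl; auto.
Qed.

Lemma lt_sqrt x s : 0 <= x -> 0 <= s -> (x < sqrt s <-> x ^ 2 < s).
Proof.
  intros Hx Hs. pose proof (sqrt_sqrt s Hs). pose proof (sqrt_pos s). split; intros; nra.
Qed.

Lemma sqrt_eq_sq x y : 0 <= y -> y ^ 2 = x -> sqrt x = y.
Proof. intros Hy <-. rewrite <- Rsqr_pow2. apply sqrt_Rsqr; auto. Qed.


Lemma sincr_sub f p q p' q' : sincr f p q -> p <= p' -> q' <= q -> sincr f p' q'.
Proof. intros H ? ? x y ? ? ?; apply H; lra. Qed.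
Lemma sdecr_sub f p q p' q' : sdecr f p q -> p <= p' -> q' <= q -> sdecr f p' q'.
Proof. intros H ? ? x y ? ? ?; apply H; lra. Qed.

Lemma unimodal f m : -1 < m < 1 -> sincr f (-1) m -> sdecr f m 1 ->
  (forall a, is_local_max f a <-> a = m) /\ (forall a, is_global_max f a <-> a = m).
Proof.
  intros Hm Hi Hd.
  assert (St : forall y, inI y -> y <> m -> f y < f m).
  { intros y [Hy1 Hy2] Hne. destruct (Rtotal_order y m) as [Hl|[He|Hg]].
    - apply Hi; lra. - contradiction. - apply Hd; lra. }
  assert (G : is_global_max f m).
  { split. unfold inI; lra. intros y Hy. destruct (Req_dec y m). subst; lra. left; auto. }
  assert (GG : forall a, is_global_max f a <-> a = m).
  { intros a; split. intros [Ha Hl]. destruct (Req_dec a m); auto.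
    specialize (Hl m (proj1 G)). specialize (St a Ha H). lra. intros ->; auto. }
  split; auto. intros a; split.
  - intros Hl. assert (Ha : inI a) by (destruct Hl; auto). destruct Ha as [Ha1 Ha2].
    destruct (Rtotal_order a m) as [Hlt|[He|Hg]]; auto.
    + exfalso. apply (notmax_incr f a m); auto; try lra.
      apply (sincr_sub f (-1) m); auto; lra.
    + exfalso. apply (notmax_decr f m a); auto; try lra.
      apply (sdecr_sub f m 1); auto; lra.
  - intros ->. apply global_local; auto.
Qed.

Lemma sqrt2_facts : 0 < sqrt 2 /\ sqrt 2 ^ 2 = 2.
Proof. split. apply sqrt_lt_R0; lra. rewrite <- Rsqr_pow2. apply Rsqr_sqrt. lra. Qed.

Lemma u_facts x : -1 < x < 1 -> 0 < sqrt (1 - x^2) /\ sqrt (1 - x ^ 2) ^ 2 = 1 - x ^ 2.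
Proof. intros. split. apply sqrt_lt_R0; nra. rewrite <- Rsqr_pow2. apply Rsqr_sqrt. nra. Qed.

Lemma sq_lt a b : 0 <= a -> 0 <= b -> a ^ 2 < b ^ 2 -> a < b.
Proof. intros; nra. Qed.

Lemma case1 h beta (hh : 0 < h) (hb : 0 < beta) :
     sup_on_I (Bfun h beta 1) (sqrt (h ^ 2 + 2 * beta ^ 2)) /\
     (forall a, is_local_max (Bfun h beta 1) a <-> a = h / sqrt (h ^ 2 + 2 * beta ^ 2)) /\
     (forall a, is_global_max (Bfun h beta 1) a <-> a = h / sqrt (h ^ 2 + 2 * beta ^ 2)).
Proof.
  set (S := sqrt (h ^ 2 + 2 * beta ^ 2)).
  assert (HS : 0 < S /\ S ^ 2 = h ^ 2 + 2 * beta ^ 2).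
  { split. apply sqrt_lt_R0; nra. unfold S; rewrite <- Rsqr_pow2. apply Rsqr_sqrt. nra. }
  destruct HS as [HS1 HS2].
  destruct sqrt2_facts as [r1 r2].
  assert (hS : h < S) by nra.
  assert (Ha : 0 < h / S < 1).
  { split. apply Rdiv_lt_0_compat; auto. apply Rmult_lt_reg_r with S; auto. field_simplify; lra. }
  assert (DE : forall x, -1 < x < 1 -> Dfun h beta 1 x =
            (h * sqrt (1 - x^2) - sqrt 2 * beta * x) / sqrt (1 - x ^ 2)).
  { intros x Hx. destruct (u_facts x Hx). unfold Dfun. change (INR 1) with 1.
    change (1 - 1)%nat with 0%nat. rewrite pow_O. field. lra. }
  assert (Hinc : sincr (Bfun h beta 1) (-1) (h / S)).
  { apply B_incr. lra. lra. intros x Hx. rewrite DE by lra. destruct (u_facts x) as [u1 u2]; [lra|].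
    apply Rdiv_lt_0_compat; auto.
    destruct (Rle_lt_dec x 0). { assert (0 < h * sqrt (1-x^2)) by nra. assert (0 < sqrt 2 * beta) by nra. assert (sqrt 2 * beta * x <= 0) by nra. lra. }
    assert (x * S < h). { apply Rmult_lt_reg_r with (/ S). apply Rinv_0_lt_compat; auto.
       field_simplify; lra. }
    assert (0 < x * S) by nra. assert (Hq : x^2 * S^2 < h^2) by (replace (x^2*S^2) with ((x*S)^2) by ring; nra).
    assert ((sqrt 2 * beta * x)^2 < (h * sqrt (1 - x^2))^2).
    { replace ((sqrt 2 * beta * x)^2) with (sqrt 2 ^2 * beta^2 * x^2) by ring.
      replace ((h * sqrt (1 - x^2))^2) with (h^2 * sqrt (1 - x^2)^2) by ring. rewrite r2, u2. rewrite HS2 in Hq. nra. }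
    apply Rlt_Rminus. apply sq_lt; auto. assert (0 < sqrt 2 * beta) by nra. nra. nra. }
  assert (Hdec : sdecr (Bfun h beta 1) (h / S) 1).
  { apply B_decr. lra. lra. intros x Hx. rewrite DE by lra. destruct (u_facts x) as [u1 u2]; [lra|].
    apply Rdiv_lt_0 with (1 := u1) || idtac.
    assert (h < x * S). { apply Rmult_lt_reg_r with (/ S). apply Rinv_0_lt_compat; auto.
       field_simplify; lra. }
    assert (Hq : h^2 < x^2 * S^2) by (replace (x^2*S^2) with ((x*S)^2) by ring; nra).
    assert ((h * sqrt (1 - x^2))^2 < (sqrt 2 * beta * x)^2).
    { replace ((sqrt 2 * beta * x)^2) with (sqrt 2 ^2 * beta^2 * x^2) by ring.
      replace ((h * sqrt (1 - x^2))^2) with (h^2 * sqrt (1 - x^2)^2) by ring. rewrite r2, u2. rewrite HS2 in Hq. nra. }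
    assert (h * sqrt (1 - x^2) - sqrt 2 * beta * x < 0).
    { apply Rlt_minus. apply sq_lt; auto. nra. assert (0 < sqrt 2 * beta) by nra. nra. }
    unfold Rdiv. assert (0 < / sqrt (1 - x^2)) by (apply Rinv_0_lt_compat; auto). nra. }
  destruct (unimodal (Bfun h beta 1) (h / S)) as [L G]; auto. lra.
  split; [|split; auto].
  assert (HB : Bfun h beta 1 (h / S) = S).
  { unfold Bfun. rewrite (sqrt_eq_sq (1 - (h/S)^2) (sqrt 2 * beta / S)).
    - transitivity ((h^2 + sqrt 2^2 * beta^2)/S). field; lra. rewrite r2, <- HS2. field; lra.
    - apply Rlt_le, Rdiv_lt_0_compat; nra.
    - transitivity (sqrt 2^2 * beta^2/S^2). field; lra. rewrite r2.
      replace (1 - (h/S)^2) with ((S^2 - h^2)/S^2) by (field; apply Rgt_not_eq, HS1). rewrite HS2. field; nra. }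
  rewrite <- HB. apply global_sup. apply G. reflexivity.
Qed.


Lemma bimodal f m : 0 < m < 1 -> sincr f (-1) (-m) -> sdecr f (-m) 0 -> sincr f 0 m -> sdecr f m 1 ->
  f (- m) = f m ->
  (forall a, is_local_max f a <-> a = m \/ a = - m) /\ (forall a, is_global_max f a <-> a = m \/ a = - m).
Proof.
  intros Hm H1 H2 H3 H4 Hs.
  assert (St : forall y, inI y -> y <> m -> y <> - m -> f y < f m).
  { intros y [Hy1 Hy2] Hn1 Hn2. destruct (Rtotal_order y (-m)) as [Hl|[He|Hg]].
    - rewrite <- Hs. apply H1; lra. - contradiction.
    - destruct (Rle_lt_dec y 0). rewrite <- Hs. apply H2; lra.
      destruct (Rtotal_order y m) as [Hl'|[He'|Hg']]. apply H3; lra. contradiction. apply H4; lra. }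
  assert (G : is_global_max f m).
  { split. unfold inI; lra. intros y Hy. destruct (Req_dec y m). subst; lra.
    destruct (Req_dec y (-m)). subst; lra. left; auto. }
  assert (G' : is_global_max f (-m)).
  { destruct G as [G1 G2]. split. unfold inI in *; lra. rewrite Hs. auto. }
  assert (GG : forall a, is_global_max f a <-> a = m \/ a = - m).
  { intros a; split. intros [Ha Hl]. destruct (Req_dec a m); auto. destruct (Req_dec a (-m)); auto.
    specialize (Hl m (proj1 G)). specialize (St a Ha H H0). lra.
    intros [-> | ->]; auto. }
  split; auto. intros a; split.
  - intros Hl. assert (Ha : inI a) by (destruct Hl; auto). destruct Ha as [Ha1 Ha2].
    destruct (Req_dec a m); auto. destruct (Req_dec a (-m)); auto. exfalso.
    destruct (Rlt_le_dec a (-m)).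
    { apply (notmax_incr f a (-m)); auto; try lra. apply (sincr_sub f (-1) (-m)); auto; lra. }
    destruct (Rle_lt_dec a 0).
    { apply (notmax_decr f (-m) a); auto; try lra. apply (sdecr_sub f (-m) 0); auto; lra. }
    destruct (Rlt_le_dec a m).
    { apply (notmax_incr f a m); auto; try lra. apply (sincr_sub f 0 m); auto; lra. }
    { apply (notmax_decr f m a); auto; try lra. apply (sdecr_sub f m 1); auto; lra. }
  - intros Ha. apply global_local, GG; auto.
Qed.

Lemma D2 h beta x : -1 < x < 1 -> Dfun h beta 2 x =
   x * (2 * h * sqrt (1 - x^2) - sqrt 2 * beta) / sqrt (1 - x ^ 2).
Proof.
  intros Hx. destruct (u_facts x Hx). unfold Dfun. change (INR 2) with 2.
  change (2 - 1)%nat with 1%nat. rewrite pow_1. field. lra.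
Qed.

Lemma sign_div x g u : 0 < u -> (0 < x * g -> 0 < x * g / u) /\ (x * g < 0 -> x * g / u < 0).
Proof.
  intros Hu. assert (0 < / u) by (apply Rinv_0_lt_compat; auto). unfold Rdiv. split; intros; nra.
Qed.

Lemma B2_sym h beta y : Bfun h beta 2 (- y) = Bfun h beta 2 y.
Proof. unfold Bfun. replace ((-y)^2) with (y^2) by ring. reflexivity. Qed.

Lemma case2a h beta (hh : 0 < h) (hb : 0 < beta) : beta_c2 h <= beta ->
     (forall a, is_local_max (Bfun h beta 2) a <-> a = 0) /\
     (forall a, is_global_max (Bfun h beta 2) a <-> a = 0).
Proof.
  unfold beta_c2. intros Hb. destruct sqrt2_facts as [r1 r2].
  assert (Gn : forall x, -1 < x < 1 -> x <> 0 -> 2 * h * sqrt (1 - x^2) - sqrt 2 * beta < 0).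
  { intros x Hx Hn. destruct (u_facts x Hx) as [u1 u2].
    assert (sqrt (1 - x^2) < 1). { assert (0 < x^2) by (apply pow_lt_1_compat || nra). nra. }
    assert (sqrt 2 * (sqrt 2 * h) <= sqrt 2 * beta) by (apply Rmult_le_compat_l; lra).
    nra. }
  apply unimodal. lra.
  - apply B_incr; try lra. intros x Hx. rewrite D2 by lra. destruct (u_facts x) as [u1 u2]; [lra|].
    apply (sign_div x _ _ u1). assert (G := Gn x ltac:(lra) ltac:(lra)). nra.
  - apply B_decr; try lra. intros x Hx. rewrite D2 by lra. destruct (u_facts x) as [u1 u2]; [lra|].
    apply (sign_div x _ _ u1). assert (G := Gn x ltac:(lra) ltac:(lra)). nra.
Qed.

Lemma case2b h beta (hh : 0 < h) (hb : 0 < beta) : beta < beta_c2 h ->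
     sup_on_I (Bfun h beta 2) (h + beta ^ 2 / (2 * h)) /\
     (forall a, is_local_max (Bfun h beta 2) a <->
        a = sqrt (1 - beta ^ 2 / (2 * h ^ 2)) \/ a = - sqrt (1 - beta ^ 2 / (2 * h ^ 2))) /\
     (forall a, is_global_max (Bfun h beta 2) a <->
        a = sqrt (1 - beta ^ 2 / (2 * h ^ 2)) \/ a = - sqrt (1 - beta ^ 2 / (2 * h ^ 2))).
Proof.
  unfold beta_c2. intros Hb. destruct sqrt2_facts as [r1 r2].
  set (t := beta ^ 2 / (2 * h ^ 2)).
  assert (Ht : 0 < t < 1).
  { unfold t. split. apply Rdiv_lt_0_compat; nra.
    assert (beta^2 < (sqrt 2 * h)^2) by nra. replace ((sqrt 2 * h)^2) with (sqrt 2^2 * h^2) in H by ring.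
    rewrite r2 in H.
    apply Rmult_lt_reg_r with (2 * h^2). nra. unfold Rdiv. rewrite Rmult_assoc, Rinv_l by nra. lra. }
  set (m := sqrt (1 - t)).
  assert (Hm : 0 < m < 1 /\ m ^ 2 = 1 - t).
  { assert (m ^ 2 = 1 - t) by (unfold m; rewrite <- Rsqr_pow2; apply Rsqr_sqrt; lra).
    assert (0 < m) by (unfold m; apply sqrt_lt_R0; lra). split; [split|]; auto. nra. }
  destruct Hm as [[m1 m2] m3].
  assert (Gs : forall x, -1 < x < 1 ->
     (x ^ 2 < 1 - t -> 0 < 2 * h * sqrt (1 - x^2) - sqrt 2 * beta) /\
     (1 - t < x ^ 2 -> 2 * h * sqrt (1 - x^2) - sqrt 2 * beta < 0)).
  { intros x Hx. destruct (u_facts x Hx) as [u1 u2].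
    assert (E1 : (2 * h * sqrt (1 - x^2))^2 = 4 * h^2 * (1 - x^2)).
    { replace ((2 * h * sqrt (1 - x^2))^2) with (4 * h^2 * sqrt (1 - x^2)^2) by ring. rewrite u2. ring. }
    assert (E2 : (sqrt 2 * beta)^2 = 4 * h^2 * t).
    { unfold t. replace ((sqrt 2 * beta)^2) with (sqrt 2^2 * beta^2) by ring. rewrite r2. field. lra. }
    split; intros.
    - assert (0 < sqrt 2 * beta) by nra. assert (0 < 2 * h * sqrt (1 - x^2)) by nra.
      cut (sqrt 2 * beta < 2 * h * sqrt (1 - x^2)); [lra|].
      apply sq_lt; try lra. rewrite E1, E2. assert (0 < h^2) by nra. nra.
    - assert (0 < sqrt 2 * beta) by nra. assert (0 < 2 * h * sqrt (1 - x^2)) by nra.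
      cut (2 * h * sqrt (1 - x^2) < sqrt 2 * beta); [lra|].
      apply sq_lt; try lra. rewrite E1, E2. assert (0 < h^2) by nra. nra. }
  assert (Sq : forall x, 0 <= x -> (x < m <-> x ^ 2 < 1 - t)).
  { intros x Hx. unfold m. apply lt_sqrt; lra. }
  assert (Sq' : forall x, 0 <= x -> (m < x <-> 1 - t < x ^ 2)).
  { intros x Hx. split; intros; nra. }
  destruct (bimodal (Bfun h beta 2) m) as [L G]; auto.
  - apply B_incr; try lra. intros x Hx. rewrite D2 by lra. destruct (u_facts x) as [u1 u2]; [lra|].
    apply (sign_div x _ _ u1). assert (1 - t < (-x)^2) by (apply Sq'; lra).
    assert (G := proj2 (Gs x ltac:(lra)) ltac:(nra)). nra.
  - apply B_decr; try lra. intros x Hx. rewrite D2 by lra. destruct (u_facts x) as [u1 u2]; [lra|].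
    apply (sign_div x _ _ u1). assert ((-x)^2 < 1 - t) by (apply Sq; lra).
    assert (G := proj1 (Gs x ltac:(lra)) ltac:(nra)). nra.
  - apply B_incr; try lra. intros x Hx. rewrite D2 by lra. destruct (u_facts x) as [u1 u2]; [lra|].
    apply (sign_div x _ _ u1). assert (x^2 < 1 - t) by (apply Sq; lra).
    assert (G := proj1 (Gs x ltac:(lra)) ltac:(nra)). nra.
  - apply B_decr; try lra. intros x Hx. rewrite D2 by lra. destruct (u_facts x) as [u1 u2]; [lra|].
    apply (sign_div x _ _ u1). assert (1 - t < x^2) by (apply Sq'; lra).
    assert (G := proj2 (Gs x ltac:(lra)) ltac:(nra)). nra.
  - apply B2_sym.
  - split; [|split; auto].
    replace (h + beta ^ 2 / (2 * h)) with (Bfun h beta 2 m).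
    + apply global_sup. apply G. auto.
    + unfold Bfun. rewrite m3. replace (1 - (1 - t)) with t by ring.
      rewrite (sqrt_eq_sq t (beta / (sqrt 2 * h))).
      * unfold t. field. split; lra.
      * apply Rlt_le, Rdiv_lt_0_compat; nra.
      * unfold t. transitivity (beta^2/(sqrt 2^2 * h^2)). field. split; lra. rewrite r2. reflexivity.
Qed.


Definition Pf (m : nat) (s : R) := s ^ m * (1 - s).
Definition s0 (m : nat) := INR m / (INR m + 1).

Lemma Pf_deriv m s : derivable_pt_lim (Pf m) s (INR m * s ^ (pred m) * (1 - s) - s ^ m).
Proof. apply is_derive_Reals. unfold Pf. auto_derive; auto. ring. Qed.

Lemma Pf_cont m s : continuity_pt (Pf m) s.
Proof. apply derivable_continuous_pt. exists (INR m * s ^ (pred m) * (1 - s) - s ^ m). apply Pf_deriv. Qed.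

Lemma INR_ge1 m : (1 <= m)%nat -> 1 <= INR m.
Proof. intros. apply (le_INR 1 m) in H. simpl in H. lra. Qed.

Lemma s0_facts m : (1 <= m)%nat -> 0 < s0 m < 1.
Proof. intros Hm. pose proof (INR_ge1 m Hm). unfold s0. split.
  apply Rdiv_lt_0_compat; lra. apply Rmult_lt_reg_r with (INR m + 1). lra.
  unfold Rdiv. rewrite Rmult_assoc, Rinv_l by lra. lra. Qed.

Lemma Pf_incr m : (1 <= m)%nat -> sincr (Pf m) 0 (s0 m).
Proof.
  intros Hm. pose proof (INR_ge1 m Hm). pose proof (s0_facts m Hm).
  apply (incr_gen _ _ 0 (s0 m) (fun x _ => Pf_deriv m x) (fun x _ => Pf_cont m x)).
  intros x Hx. destruct m as [|n]; [lia|]. simpl pred.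
  replace (INR (S n) * x ^ n * (1 - x) - x ^ S n) with (x ^ n * (INR (S n) * (1 - x) - x)) by (simpl; ring).
  apply Rmult_lt_0_compat. apply pow_lt; lra.
  assert (x * (INR (S n) + 1) < INR (S n)).
  { destruct Hx as [_ Hx]. unfold s0 in Hx. apply Rmult_lt_compat_r with (r := INR (S n) + 1) in Hx; [|lra].
    unfold Rdiv in Hx. rewrite Rmult_assoc, Rinv_l in Hx by lra. lra. }
  lra.
Qed.

Lemma Pf_decr m : (1 <= m)%nat -> sdecr (Pf m) (s0 m) 1.
Proof.
  intros Hm. pose proof (INR_ge1 m Hm). pose proof (s0_facts m Hm).
  apply (decr_gen _ _ (s0 m) 1 (fun x _ => Pf_deriv m x) (fun x _ => Pf_cont m x)).
  intros x Hx. destruct m as [|n]; [lia|]. simpl pred.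
  replace (INR (S n) * x ^ n * (1 - x) - x ^ S n) with (x ^ n * (INR (S n) * (1 - x) - x)) by (simpl; ring).
  assert (INR (S n) < x * (INR (S n) + 1)).
  { destruct Hx as [Hx _]. unfold s0 in Hx. apply Rmult_lt_compat_r with (r := INR (S n) + 1) in Hx; [|lra].
    unfold Rdiv in Hx. rewrite Rmult_assoc, Rinv_l in Hx by lra. lra. }
  assert (0 < x ^ n) by (apply pow_lt; lra). nra.
Qed.

Lemma Pf0 m : (1 <= m)%nat -> Pf m 0 = 0.
Proof. intros. unfold Pf. rewrite pow_i by lia. ring. Qed.
Lemma Pf1 m : Pf m 1 = 0.
Proof. unfold Pf. ring. Qed.

Lemma sq_pow x m : (x ^ 2) ^ m = (x ^ m) ^ 2.
Proof. rewrite <- !pow_mult. rewrite Nat.mul_comm. reflexivity. Qed.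

Definition cc h beta m := 2 * (beta / (h * INR (m + 2))) ^ 2.

Lemma INRm2 m : INR (m + 2) = INR m + 2.
Proof. rewrite plus_INR. simpl. ring. Qed.

Lemma Dk_form h beta m x : 0 < h -> -1 < x < 1 ->
  Dfun h beta (m + 2) x = x * (h * INR (m + 2) * x ^ m * sqrt (1 - x ^ 2) - sqrt 2 * beta) / sqrt (1 - x ^ 2).
Proof.
  intros hh Hx. destruct (u_facts x Hx) as [u1 u2]. unfold Dfun.
  replace (m + 2 - 1)%nat with (S m) by lia. simpl pow at 1. field. lra.
Qed.

Lemma A_sq h m x : -1 < x < 1 ->
  (h * INR (m + 2) * x ^ m * sqrt (1 - x ^ 2)) ^ 2 = (h * INR (m + 2)) ^ 2 * Pf m (x ^ 2).
Proof.
  intros Hx. destruct (u_facts x Hx) as [u1 u2]. unfold Pf. rewrite sq_pow.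
  replace ((h * INR (m + 2) * x ^ m * sqrt (1 - x ^ 2)) ^ 2) with
     ((h * INR (m + 2)) ^ 2 * (x ^ m) ^ 2 * sqrt (1 - x ^ 2) ^ 2) by ring.
  rewrite u2. ring.
Qed.

Lemma b_sq h beta m : 0 < h -> (sqrt 2 * beta) ^ 2 = (h * INR (m + 2)) ^ 2 * cc h beta m.
Proof.
  intros hh. destruct sqrt2_facts as [r1 r2]. unfold cc. rewrite INRm2.
  pose proof (pos_INR m).
  replace ((sqrt 2 * beta) ^ 2) with (sqrt 2 ^ 2 * beta ^ 2) by ring. rewrite r2.
  field. lra.
Qed.

Lemma Dk_sign h beta m x : 0 < h -> 0 < beta -> 0 < x < 1 ->
  (cc h beta m < Pf m (x ^ 2) -> 0 < Dfun h beta (m + 2) x) /\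
  (Pf m (x ^ 2) < cc h beta m -> Dfun h beta (m + 2) x < 0).
Proof.
  intros hh hb Hx. destruct sqrt2_facts as [r1 r2]. destruct (u_facts x) as [u1 u2]; [lra|].
  rewrite Dk_form by lra.
  pose proof (A_sq h m x ltac:(lra)). pose proof (b_sq h beta m hh).
  assert (HK : 0 < INR (m + 2)) by (rewrite INRm2; pose proof (pos_INR m); lra).
  assert (0 < (h * INR (m + 2)) ^ 2) by (apply pow_lt; nra).
  assert (0 <= h * INR (m + 2) * x ^ m * sqrt (1 - x ^ 2)).
  { assert (0 < x ^ m) by (apply pow_lt; lra). assert (0 < h * INR (m + 2)) by nra.
    apply Rmult_le_pos; [|lra]. apply Rmult_le_pos; lra. }
  assert (0 < sqrt 2 * beta) by nra.
  split; intros Hc.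
  - apply (sign_div x _ _ u1). apply Rmult_lt_0_compat; [lra|].
    cut (sqrt 2 * beta < h * INR (m + 2) * x ^ m * sqrt (1 - x ^ 2)); [lra|].
    apply sq_lt; try lra. rewrite H, H0. apply Rmult_lt_compat_l; auto.
  - apply (sign_div x _ _ u1).
    cut (h * INR (m + 2) * x ^ m * sqrt (1 - x ^ 2) < sqrt 2 * beta); [nra|].
    apply sq_lt; try lra. rewrite H, H0. apply Rmult_lt_compat_l; auto.
Qed.

Ltac fs := field; repeat split; try lra; try nra.

Lemma B_sym_even h beta k : Nat.Even k -> forall y, Bfun h beta k (- y) = Bfun h beta k y.
Proof.
  intros [j ->] y. unfold Bfun. rewrite !pow_mult. replace ((- y) ^ 2) with (y ^ 2) by ring. reflexivity.
Qed.

Lemma B_neg_odd h beta k : 0 < h -> 0 < beta -> Nat.Odd k -> sincr (Bfun h beta k) (-1) 0.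
Proof.
  intros hh hb [j Hj]. destruct sqrt2_facts as [r1 r2]. apply B_incr; try lra.
  intros x Hx. destruct (u_facts x) as [u1 u2]; [lra|]. unfold Dfun.
  replace (k - 1)%nat with (2 * j)%nat by lia. rewrite pow_mult.
  assert (0 <= (x ^ 2) ^ j) by (apply pow_le; nra).
  assert (0 <= INR k) by apply pos_INR.
  assert (0 <= h * INR k * (x ^ 2) ^ j) by (apply Rmult_le_pos; nra).
  assert (sqrt 2 * beta * x / sqrt (1 - x ^ 2) < 0).
  { replace (sqrt 2 * beta * x / sqrt (1 - x ^ 2)) with (x * (sqrt 2 * beta) / sqrt (1 - x ^ 2)) by (unfold Rdiv; ring).
    apply (sign_div x _ _ u1). assert (0 < sqrt 2 * beta) by nra. nra. }
  lra.
Qed.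

Lemma sincr_from_sym f q : (forall y, f (- y) = f y) -> sdecr f 0 q -> sincr f (- q) 0.
Proof.
  intros Hs Hd x y Hx Hxy Hy. rewrite <- (Hs x), <- (Hs y). apply Hd; lra.
Qed.

Lemma Rpower_half_sq x y : Rpower x (y / 2) ^ 2 = Rpower x y.
Proof. simpl. rewrite Rmult_1_r, <- Rpower_plus. f_equal. field. Qed.

Lemma Rpower_pos x y : 0 < Rpower x y.
Proof. unfold Rpower. apply exp_pos. Qed.

Lemma pow_div a b n : b <> 0 -> (a / b) ^ n = a ^ n / b ^ n.
Proof. intros. unfold Rdiv. rewrite Rpow_mult_distr, pow_inv. reflexivity. Qed.

Lemma cc_form h b m : 0 < h -> cc h b m = 2 / (h * INR (m + 2)) ^ 2 * b ^ 2.
Proof. intros. unfold cc. rewrite INRm2. pose proof (pos_INR m). field. lra. Qed.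

Lemma cc_lt h m b1 b2 : 0 < h -> 0 < b1 -> 0 < b2 -> b1 < b2 -> cc h b1 m < cc h b2 m.
Proof.
  intros. rewrite !cc_form by auto. assert (0 < INR (m + 2)) by (rewrite INRm2; pose proof (pos_INR m); lra).
  assert (0 < 2 / (h * INR (m + 2)) ^ 2) by (apply Rdiv_lt_0_compat; [lra| apply pow_lt; nra]).
  apply Rmult_lt_compat_l; auto. nra.
Qed.

Definition s1c (m : nat) := 1 - 1 / (INR m + 1) ^ 2.

Lemma btc_rel h m : 0 < h -> (1 <= m)%nat -> 0 < beta_tc (m + 2) h /\ cc h (beta_tc (m + 2) h) m = Pf m (s0 m).
Proof.
  intros hh Hm. pose proof (INR_ge1 m Hm). destruct sqrt2_facts as [r1 r2].
  unfold beta_tc. rewrite INRm2. replace (INR m + 2 - 2) with (INR m) by ring.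
  replace (INR m + 2 - 1) with (INR (S m)) by (rewrite S_INR; ring).
  pose proof (Rpower_pos (INR m) (INR m / 2)). pose proof (Rpower_pos (INR (S m)) (INR (S m) / 2)).
  split.
  - assert (0 < h * (INR m + 2)) by nra.
    assert (0 < h * (INR m + 2) / sqrt 2) by (apply Rdiv_lt_0_compat; lra).
    assert (0 < Rpower (INR m) (INR m / 2) / Rpower (INR (S m)) (INR (S m) / 2)) by (apply Rdiv_lt_0_compat; lra).
    apply Rmult_lt_0_compat; lra.
  - unfold cc. rewrite INRm2.
    set (R1 := Rpower (INR m) (INR m / 2)). set (R2 := Rpower (INR (S m)) (INR (S m) / 2)). assert (0 < R2) by apply Rpower_pos. assert (0 < R1) by apply Rpower_pos.
    assert (E : h * (INR m + 2) / sqrt 2 * (R1 / R2) / (h * (INR m + 2)) = R1 / R2 / sqrt 2) by fs.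
    rewrite E. clear E.
    replace (2 * (R1 / R2 / sqrt 2) ^ 2) with (2 * R1 ^ 2 / (R2 ^ 2 * sqrt 2 ^ 2)) by fs.
    rewrite r2. unfold R1, R2. rewrite !Rpower_half_sq, !Rpower_pow by (rewrite ?S_INR; lra).
    unfold Pf, s0. rewrite pow_div by lra. rewrite S_INR. simpl pow at 2.
    assert (0 < (INR m + 1) ^ m) by (apply pow_lt; lra).
    field. lra.
Qed.

Lemma s1c_facts m : (1 <= m)%nat -> s0 m < s1c m < 1.
Proof.
  intros Hm. pose proof (INR_ge1 m Hm). unfold s0, s1c.
  assert (0 < 1 / (INR m + 1) ^ 2) by (apply Rdiv_lt_0_compat; [lra|apply pow_lt; lra]).
  split; [|lra].
  replace (INR m / (INR m + 1)) with (1 - 1 / (INR m + 1)) by (field; lra).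
  assert (1 / (INR m + 1) ^ 2 < 1 / (INR m + 1)).
  { apply Rmult_lt_reg_r with ((INR m + 1) ^ 2). apply pow_lt; lra.
    field_simplify; lra. }
  lra.
Qed.

Lemma bc_rel h m : 0 < h -> (1 <= m)%nat -> 0 < beta_c (m + 2) h /\ cc h (beta_c (m + 2) h) m = Pf m (s1c m).
Proof.
  intros hh Hm. pose proof (INR_ge1 m Hm). destruct sqrt2_facts as [r1 r2].
  pose proof (s1c_facts m Hm). pose proof (s0_facts m Hm).
  unfold beta_c. rewrite INRm2. replace (INR m + 2 - 2) with (INR m) by ring.
  replace (INR m + 2 - 1) with (INR m + 1) by ring. fold (s1c m).
  pose proof (Rpower_pos (s1c m) ((INR m + 2) / 2)).
  split.
  - apply Rmult_lt_0_compat; auto. apply Rmult_lt_0_compat. apply Rdiv_lt_0_compat; lra.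
    apply Rdiv_lt_0_compat; lra.
  - unfold cc. rewrite INRm2.
    set (R1 := Rpower (s1c m) ((INR m + 2) / 2)).
    replace (2 * (h / sqrt 2 * ((INR m + 1) / INR m) * R1 / (h * (INR m + 2))) ^ 2)
      with (2 * (INR m + 1) ^ 2 * R1 ^ 2 / (sqrt 2 ^ 2 * INR m ^ 2 * (INR m + 2) ^ 2)) by fs.
    rewrite r2. unfold R1. rewrite Rpower_half_sq. rewrite <- INRm2. rewrite Rpower_pow by lra.
    rewrite pow_add. unfold Pf. rewrite INRm2. unfold s1c. field. lra.
Qed.

Lemma crit_Pf h beta m a : crit_eq h beta (m + 2) a <-> Pf m (a ^ 2) = cc h beta m.
Proof.
  unfold crit_eq, Pf, cc. replace (2 * (m + 2 - 2))%nat with (2 * m)%nat by lia. rewrite pow_mult. tauto.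
Qed.

Lemma sq_eq a b : 0 <= a -> 0 <= b -> a ^ 2 = b ^ 2 -> a = b.
Proof. intros. nra. Qed.


Lemma gt_sqrt x s : 0 <= x -> 0 <= s -> (sqrt s < x <-> s < x ^ 2).
Proof.
  intros Hx Hs. pose proof (sqrt_sqrt s Hs). pose proof (sqrt_pos s). split; intros; nra.
Qed.

Lemma sqrt_in s : 0 < s < 1 -> 0 < sqrt s < 1 /\ sqrt s ^ 2 = s.
Proof.
  intros Hs. assert (E : sqrt s ^ 2 = s) by (rewrite <- Rsqr_pow2; apply Rsqr_sqrt; lra).
  assert (0 < sqrt s) by (apply sqrt_lt_R0; lra). split; auto. split; auto. nra.
Qed.

Lemma case3a h beta m (hh : 0 < h) (hb : 0 < beta) (Hm : (1 <= m)%nat) :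
  beta_tc (m + 2) h <= beta ->
     (forall a, is_local_max (Bfun h beta (m + 2)) a <-> a = 0) /\
     (forall a, is_global_max (Bfun h beta (m + 2)) a <-> a = 0).
Proof.
  intros Hb. destruct (btc_rel h m hh Hm) as [bt1 bt2].
  assert (Hc : Pf m (s0 m) <= cc h beta m).
  { destruct (Req_dec (beta_tc (m + 2) h) beta) as [<-|Hne]. lra.
    left. rewrite <- bt2. apply cc_lt; auto. lra. }
  pose proof (s0_facts m Hm) as S0. destruct (sqrt_in (s0 m) S0) as [[q1 q2] q3].
  assert (Hd : sdecr (Bfun h beta (m + 2)) 0 1).
  { apply (sdecr_join _ 0 (sqrt (s0 m)) 1).
    - apply B_decr; try lra. intros x Hx. apply (Dk_sign h beta m x hh hb ltac:(lra)).
      assert (x ^ 2 < s0 m) by (apply lt_sqrt; lra).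
      assert (Pf m (x ^ 2) < Pf m (s0 m)) by (apply (Pf_incr m Hm); nra). lra.
    - apply B_decr; try lra. intros x Hx. apply (Dk_sign h beta m x hh hb ltac:(lra)).
      assert (s0 m < x ^ 2) by (apply gt_sqrt; lra).
      assert (Pf m (x ^ 2) < Pf m (s0 m)) by (apply (Pf_decr m Hm); nra). lra. }
  assert (Hi : sincr (Bfun h beta (m + 2)) (-1) 0).
  { destruct (Nat.Even_or_Odd (m + 2)) as [He|Ho].
    - apply (sincr_from_sym _ 1). apply B_sym_even; auto. auto.
    - apply B_neg_odd; auto. }
  apply unimodal; auto. lra.
Qed.

Lemma odd_case h beta k (hh : 0 < h) (hb : 0 < beta) : Nat.Odd k ->
     forall a, -1 <= a < 0 -> ~ is_local_max (Bfun h beta k) a.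
Proof.
  intros Ho a Ha. apply (notmax_incr _ a 0); try lra.
  apply (sincr_sub _ (-1) 0); try lra. apply B_neg_odd; auto.
Qed.


Lemma three_way f p q : inI p -> inI q -> (forall y, inI y -> f y <= f p \/ f y <= f q) ->
  (forall a, 0 <= a <= 1 -> a = p \/ a = q \/ f a < f p \/ f a < f q) ->
  (f q < f p -> forall a, 0 <= a <= 1 -> (is_global_max f a <-> a = p)) /\
  (f q = f p -> forall a, 0 <= a <= 1 -> (is_global_max f a <-> a = p \/ a = q)) /\
  (f p < f q -> forall a, 0 <= a <= 1 -> (is_global_max f a <-> a = q)).
Proof.
  intros Hp Hq W S. split; [|split]; intros Hc a Ha; split.
  - intros [_ G]. specialize (G p Hp) as G1. specialize (G q Hq) as G2 .
    destruct (S a Ha) as [E|[E|[E|E]]]; auto; try lra. subst. lra.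
  - intros ->. split; auto. intros y Hy. destruct (W y Hy); lra.
  - intros [_ G]. specialize (G p Hp) as G1. specialize (G q Hq) as G2 .
    destruct (S a Ha) as [E|[E|[E|E]]]; auto; lra.
  - intros [-> | ->]; (split; [auto|]); intros y Hy; destruct (W y Hy); lra.
  - intros [_ G]. specialize (G p Hp) as G1. specialize (G q Hq) as G2 .
    destruct (S a Ha) as [E|[E|[E|E]]]; auto; try lra. subst. lra.
  - intros ->. split; auto. intros y Hy. destruct (W y Hy); lra.
Qed.

Lemma B0_val h beta m : Bfun h beta (m + 2) 0 = sqrt 2 * beta.
Proof.
  unfold Bfun. rewrite pow_i by lia. replace (1 - 0 ^ 2) with 1 by ring. rewrite sqrt_1. ring.
Qed.

Lemma Bdiff h beta m a : 0 < h -> 0 < beta -> 0 < a < 1 -> Pf m (a ^ 2) = cc h beta m ->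
  Bfun h beta (m + 2) a - Bfun h beta (m + 2) 0 =
  h * a ^ m * ((INR m + 1) * sqrt (1 - a ^ 2) - 1) * (sqrt (1 - a ^ 2) - 1).
Proof.
  intros hh hb Ha HP. destruct sqrt2_facts as [r1 r2]. destruct (u_facts a) as [u1 u2]; [lra|].
  pose proof (A_sq h m a ltac:(lra)) as HA. pose proof (b_sq h beta m hh) as HB.
  assert (0 < a ^ m) by (apply pow_lt; lra).
  assert (HK : 0 < INR (m + 2)) by (rewrite INRm2; pose proof (pos_INR m); lra).
  assert (E : h * INR (m + 2) * a ^ m * sqrt (1 - a ^ 2) = sqrt 2 * beta).
  { apply sq_eq. apply Rmult_le_pos; [|lra]. apply Rmult_le_pos; [|lra]. nra. nra.
    rewrite HA, HB, HP. reflexivity. }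
  rewrite B0_val. unfold Bfun. rewrite <- E. rewrite pow_add. rewrite INRm2.
  set (u := sqrt (1 - a ^ 2)) in *. replace (a ^ 2) with (1 - u ^ 2) by lra. ring.
Qed.


Lemma roots h beta m (hh : 0 < h) (hb : 0 < beta) (Hm : (1 <= m)%nat) :
  cc h beta m < Pf m (s0 m) ->
  exists s1 s2, 0 < s1 < s0 m /\ s0 m < s2 < 1 /\ Pf m s1 = cc h beta m /\ Pf m s2 = cc h beta m.
Proof.
  intros Hc. pose proof (s0_facts m Hm) as S0.
  assert (Hc0 : 0 < cc h beta m).
  { rewrite cc_form by auto. assert (0 < INR (m + 2)) by (rewrite INRm2; pose proof (pos_INR m); lra).
    apply Rmult_lt_0_compat. apply Rdiv_lt_0_compat; [lra| apply pow_lt; nra]. nra. }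
  assert (Hcont : continuity (Pf m)) by (intros x; apply Pf_cont).
  destruct (IVT_gen (Pf m) (s0 m) 1 (cc h beta m) Hcont) as [s2 [Hs2 E2]].
  { rewrite Pf1, Rmin_right, Rmax_left by lra. lra. }
  destruct (IVT_gen (Pf m) 0 (s0 m) (cc h beta m) Hcont) as [s1 [Hs1 E1]].
  { rewrite (Pf0 m Hm), Rmin_left, Rmax_right by lra. lra. }
  rewrite Rmin_left, Rmax_right in Hs1, Hs2 by lra.
  exists s1, s2. split; [|split]; auto.
  - split. destruct (Req_dec s1 0). rewrite H, (Pf0 m Hm) in E1. lra. lra.
    destruct (Req_dec s1 (s0 m)). rewrite H in E1. lra. lra.
  - split. destruct (Req_dec s2 (s0 m)). rewrite H in E2. lra. lra.
    destruct (Req_dec s2 1). rewrite H, Pf1 in E2. lra. lra.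
Qed.

Lemma case3b h beta m (hh : 0 < h) (hb : 0 < beta) (Hm : (1 <= m)%nat) :
  beta < beta_tc (m + 2) h ->
     exists ahat,
       crit_eq h beta (m + 2) ahat /\
       (forall a, crit_eq h beta (m + 2) a -> a <= ahat) /\
       sqrt ((INR (m + 2) - 2) / (INR (m + 2) - 1)) < ahat < 1 /\
       (forall a, sqrt ((INR (m + 2) - 2) / (INR (m + 2) - 1)) < a < 1 -> crit_eq h beta (m + 2) a -> a = ahat) /\
       (forall a, 0 <= a <= 1 -> (is_local_max (Bfun h beta (m + 2)) a <-> a = 0 \/ a = ahat)) /\
       (beta_c (m + 2) h < beta ->
          forall a, 0 <= a <= 1 -> (is_global_max (Bfun h beta (m + 2)) a <-> a = 0)) /\
       (beta = beta_c (m + 2) h ->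
          forall a, 0 <= a <= 1 -> (is_global_max (Bfun h beta (m + 2)) a <-> a = 0 \/ a = ahat)) /\
       (beta < beta_c (m + 2) h ->
          forall a, 0 <= a <= 1 -> (is_global_max (Bfun h beta (m + 2)) a <-> a = ahat)) /\
       ((4 <= m + 2)%nat -> Nat.Even (m + 2) ->
          (is_local_max (Bfun h beta (m + 2)) ahat -> is_local_max (Bfun h beta (m + 2)) (- ahat)) /\
          (is_global_max (Bfun h beta (m + 2)) ahat -> is_global_max (Bfun h beta (m + 2)) (- ahat)) /\
          (forall a, -1 <= a < 0 -> is_local_max (Bfun h beta (m + 2)) a -> a = - ahat) /\
          (forall a, -1 <= a < 0 -> is_global_max (Bfun h beta (m + 2)) a -> a = - ahat)).
Proof.
  intros Hb. destruct (btc_rel h m hh Hm) as [bt1 bt2].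
  assert (Hc : cc h beta m < Pf m (s0 m)) by (rewrite <- bt2; apply cc_lt; auto).
  pose proof (s0_facts m Hm) as S0. destruct (sqrt_in (s0 m) S0) as [[q1 q2] q3].
  destruct (roots h beta m hh hb Hm Hc) as [s1 [s2 [Hs1 [Hs2 [E1 E2]]]]].
  set (c := cc h beta m) in *.
  destruct (sqrt_in s1 ltac:(lra)) as [[a1p a1l] a1s].
  destruct (sqrt_in s2 ltac:(lra)) as [[ahp ahl] ahs].
  set (a1 := sqrt s1) in *. set (ah := sqrt s2) in *.
  assert (a1 < ah) by nra.
  set (B := Bfun h beta (m + 2)).
  assert (M1 : sdecr B 0 a1).
  { apply B_decr; try lra. intros x Hx. apply (Dk_sign h beta m x hh hb ltac:(lra)).
    assert (x ^ 2 < s1) by (rewrite <- a1s; nra).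
    fold c. rewrite <- E1. apply (Pf_incr m Hm); nra. }
  assert (M2 : sincr B a1 ah).
  { apply B_incr; try lra. intros x Hx. apply (Dk_sign h beta m x hh hb ltac:(lra)).
    assert (s1 < x ^ 2) by (rewrite <- a1s; nra).
    assert (x ^ 2 < s2) by (rewrite <- ahs; nra).
    fold c. destruct (Rle_lt_dec (x ^ 2) (s0 m)).
    - rewrite <- E1. apply (Pf_incr m Hm); lra.
    - rewrite <- E2. apply (Pf_decr m Hm); lra. }
  assert (M3 : sdecr B ah 1).
  { apply B_decr; try lra. intros x Hx. apply (Dk_sign h beta m x hh hb ltac:(lra)).
    assert (s2 < x ^ 2) by (rewrite <- ahs; nra).
    assert (x ^ 2 < 1) by nra.
    fold c. rewrite <- E2. apply (Pf_decr m Hm); lra. }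
  assert (Hneg : forall y, -1 <= y < 0 -> B y < B 0 \/ B y = B (- y)).
  { intros y Hy. destruct (Nat.Even_or_Odd (m + 2)) as [He|Ho].
    - right. unfold B. rewrite B_sym_even; auto.
    - left. apply (B_neg_odd h beta (m + 2)); auto; lra. }
  assert (Spos : forall a, 0 <= a <= 1 -> a = 0 \/ a = ah \/ B a < B 0 \/ B a < B ah).
  { intros a Ha. destruct (Req_dec a 0); auto. destruct (Req_dec a ah); auto.
    right; right. destruct (Rle_lt_dec a a1). left; apply M1; lra.
    destruct (Rlt_le_dec a ah). right; apply M2; lra. right; apply M3; lra. }
  assert (W : forall y, inI y -> B y <= B 0 \/ B y <= B ah).
  { intros y [Hy1 Hy2]. destruct (Rle_lt_dec 0 y).
    - destruct (Spos y) as [E|[E|[E|E]]]; try lra; rewrite E; lra.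
    - destruct (Hneg y) as [E|E]; try lra. rewrite E.
      destruct (Spos (- y)) as [E'|[E'|[E'|E']]]; try lra. rewrite E'. lra. }
  assert (LOC : forall a, 0 <= a <= 1 -> (is_local_max B a <-> a = 0 \/ a = ah)).
  { intros a Ha. split.
    - intros Hl. destruct (Req_dec a 0); auto. destruct (Req_dec a ah); auto. exfalso.
      destruct (Rle_lt_dec a a1).
      { apply (notmax_decr B 0 a); try lra; try exact Hl. apply (sdecr_sub B 0 a1); auto; lra. }
      destruct (Rlt_le_dec a ah).
      { apply (notmax_incr B a ah); try lra; try exact Hl. apply (sincr_sub B a1 ah); auto; lra. }
      { apply (notmax_decr B ah a); try lra; try exact Hl. apply (sdecr_sub B ah 1); auto; lra. }
    - intros [-> | ->].
      + split. unfold inI; lra. exists a1. split; auto. intros y Hy Hya.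
        rewrite Rminus_0_r in Hya. destruct (Rlt_le_dec y 0).
        * rewrite Rabs_left in Hya by lra. destruct (Hneg y) as [E|E]. destruct Hy; lra. lra.
          rewrite E. left. apply M1; lra.
        * rewrite Rabs_right in Hya by lra. destruct (Req_dec y 0). rewrite H0; lra. left; apply M1; lra.
      + split. unfold inI; lra. exists (ah - a1). split. lra. intros y [Hy1 Hy2] Hya.
        destruct (Rtotal_order y ah) as [Hlt|[He|Hgt]].
        * rewrite Rabs_left in Hya by lra. left. apply M2; lra.
        * rewrite He; lra.
        * left. apply M3; lra. }
  assert (Ip0 : inI 0) by (unfold inI; lra).
  assert (Iah : inI ah) by (unfold inI; lra).
  destruct (three_way B 0 ah Ip0 Iah W Spos) as [T1 [T2 T3]].
  assert (Pah : Pf m (ah ^ 2) = c) by (rewrite ahs; auto).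
  pose proof (Bdiff h beta m ah hh hb ltac:(lra) Pah) as BD. fold B in BD.
  destruct (u_facts ah) as [u1 u2]; [lra|].
  set (u := sqrt (1 - ah ^ 2)) in *.
  assert (u < 1) by nra.
  pose proof (INR_ge1 m Hm) as Im.
  set (M := INR m + 1) in *. assert (HM2 : 2 <= M) by (unfold M; lra).
  assert (Hpos : 0 < h * ah ^ m) by (apply Rmult_lt_0_compat; auto; apply pow_lt; lra).
  assert (Uu : u ^ 2 = 1 - s2) by (rewrite u2, ahs; reflexivity).
  assert (Us : (1 / M) ^ 2 = 1 - s1c m) by (unfold s1c; fold M; field; lra).
  destruct (bc_rel h m hh Hm) as [bc1 bc2].
  pose proof (s1c_facts m Hm) as S1.
  assert (0 < 1 / M) by (apply Rdiv_lt_0_compat; lra).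
  assert (MM : M * (1 / M) = 1) by (field; lra).
  assert (SG1 : beta_c (m + 2) h < beta -> B ah < B 0).
  { intros Hbc. assert (Pf m (s1c m) < Pf m s2) by (rewrite E2, <- bc2; apply cc_lt; auto).
    assert (s2 < s1c m).
    { destruct (Rlt_le_dec s2 (s1c m)); auto. destruct (Req_dec s2 (s1c m)). rewrite <- H3 in *; lra.
      assert (Pf m s2 < Pf m (s1c m)) by (apply (Pf_decr m Hm); lra). lra. }
    assert (1 / M < u) by (apply sq_lt; lra).
    assert (0 < M * u - 1) by nra.
    assert (0 < (M * u - 1) * (1 - u)) by nra. nra. }
  assert (SG2 : beta = beta_c (m + 2) h -> B ah = B 0).
  { intros Hbc. assert (Pf m (s1c m) = Pf m s2) by (rewrite E2, <- bc2; unfold c; rewrite Hbc; reflexivity).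
    assert (s2 = s1c m).
    { destruct (Rtotal_order s2 (s1c m)) as [Hl|[He|Hg]]; auto.
      assert (Pf m (s1c m) < Pf m s2) by (apply (Pf_decr m Hm); lra). lra.
      assert (Pf m s2 < Pf m (s1c m)) by (apply (Pf_decr m Hm); lra). lra. }
    assert (Hu : u = 1 / M) by (apply sq_eq; lra).
    assert (Hz : M * u - 1 = 0) by (rewrite Hu; field; lra). rewrite Hz, Rmult_0_r, Rmult_0_l in BD. lra. }
  assert (SG3 : beta < beta_c (m + 2) h -> B 0 < B ah).
  { intros Hbc. assert (Pf m s2 < Pf m (s1c m)) by (rewrite E2, <- bc2; apply cc_lt; auto).
    assert (s1c m < s2).
    { destruct (Rlt_le_dec (s1c m) s2); auto. destruct (Req_dec s2 (s1c m)). rewrite <- H3 in *; lra.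
      assert (Pf m (s1c m) < Pf m s2) by (apply (Pf_decr m Hm); lra). lra. }
    assert (u < 1 / M) by (apply sq_lt; lra).
    assert (M * u - 1 < 0) by nra.
    assert (0 < (1 - M * u) * (1 - u)) by nra. nra. }
  exists ah.
  assert (Hs0 : sqrt ((INR (m + 2) - 2) / (INR (m + 2) - 1)) = sqrt (s0 m)).
  { rewrite INRm2. unfold s0. f_equal. f_equal; ring. }
  rewrite Hs0.
  split; [|split; [|split; [|split; [|split; [|split; [|split; [|split]]]]]]].
  - apply crit_Pf. exact Pah.
  - intros a Ha. apply crit_Pf in Ha. fold c in Ha. destruct (Rle_lt_dec a ah); auto. exfalso.
    destruct (Rlt_le_dec a 1).
    + assert (s2 < a ^ 2) by nra. assert (Pf m (a ^ 2) < Pf m s2) by (apply (Pf_decr m Hm); nra). lra.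
    + assert (Pf m (a ^ 2) <= 0).
      { unfold Pf. assert (0 <= (a ^ 2) ^ m) by (apply pow_le; nra). assert (1 <= a ^ 2) by nra. nra. }
      assert (0 < c) by (rewrite <- E2; unfold Pf; apply Rmult_lt_0_compat; [apply pow_lt|]; lra). lra.
  - split; [|lra]. apply (proj2 (gt_sqrt ah (s0 m) ltac:(lra) ltac:(lra))). rewrite ahs; lra.
  - intros a Ha Hce. apply crit_Pf in Hce. fold c in Hce.
    assert (s0 m < a ^ 2) by (rewrite <- q3; nra).
    assert (a ^ 2 = s2).
    { destruct (Rtotal_order (a ^ 2) s2) as [Hl|[He|Hg]]; auto.
      assert (Pf m s2 < Pf m (a ^ 2)) by (apply (Pf_decr m Hm); nra). lra.
      assert (Pf m (a ^ 2) < Pf m s2) by (apply (Pf_decr m Hm); nra). lra. }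
    apply sq_eq; lra.
  - exact LOC.
  - intros Hbc. apply T1. apply SG1; auto.
  - intros Hbc. apply T2. apply SG2; auto.
  - intros Hbc. apply T3. apply SG3; auto.
  - intros _ He. assert (Hs : forall y, B (- y) = B y) by (intros; unfold B; apply B_sym_even; auto).
    assert (LN : forall a, -1 <= a < 0 -> is_local_max B a -> a = - ah).
    { intros a Ha Hl. apply (sym_local B a Hs) in Hl. apply LOC in Hl; [|lra].
      destruct Hl; lra. }
    split; [|split; [|split]].
    + apply sym_local; auto.
    + apply sym_global; auto.
    + exact LN.
    + intros a Ha Hg. apply LN; auto. apply global_local; auto.
Qed.

Theorem lemma5p1 (h beta : R) (k : nat) (hh : 0 < h) (hb : 0 < beta) :
  (* k = 1 *)
  (k = 1%nat ->
     sup_on_I (Bfun h beta k) (sqrt (h ^ 2 + 2 * beta ^ 2)) /\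
     (forall a, is_local_max (Bfun h beta k) a <-> a = h / sqrt (h ^ 2 + 2 * beta ^ 2)) /\
     (forall a, is_global_max (Bfun h beta k) a <-> a = h / sqrt (h ^ 2 + 2 * beta ^ 2)))
  /\
  (* k = 2, beta >= beta_c(2,h) *)
  (k = 2%nat -> beta_c2 h <= beta ->
     (forall a, is_local_max (Bfun h beta k) a <-> a = 0) /\
     (forall a, is_global_max (Bfun h beta k) a <-> a = 0))
  /\
  (* k = 2, beta < beta_c(2,h) *)
  (k = 2%nat -> beta < beta_c2 h ->
     sup_on_I (Bfun h beta k) (h + beta ^ 2 / (2 * h)) /\
     (forall a, is_local_max (Bfun h beta k) a <->
        a = sqrt (1 - beta ^ 2 / (2 * h ^ 2)) \/ a = - sqrt (1 - beta ^ 2 / (2 * h ^ 2))) /\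
     (forall a, is_global_max (Bfun h beta k) a <->
        a = sqrt (1 - beta ^ 2 / (2 * h ^ 2)) \/ a = - sqrt (1 - beta ^ 2 / (2 * h ^ 2))))
  /\
  (* k >= 3, beta >= tilde beta_c(k,h) *)
  ((3 <= k)%nat -> beta_tc k h <= beta ->
     (forall a, is_local_max (Bfun h beta k) a <-> a = 0) /\
     (forall a, is_global_max (Bfun h beta k) a <-> a = 0))
  /\
  (* k >= 3, beta < tilde beta_c(k,h) *)
  ((3 <= k)%nat -> beta < beta_tc k h ->
     exists ahat,
       (* ahat is the largest real solution of the equation ... *)
       crit_eq h beta k ahat /\
       (forall a, crit_eq h beta k a -> a <= ahat) /\
       (* ... and the unique solution in (sqrt((k-2)/(k-1)), 1) *)
       sqrt ((INR k - 2) / (INR k - 1)) < ahat < 1 /\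
       (forall a, sqrt ((INR k - 2) / (INR k - 1)) < a < 1 -> crit_eq h beta k a -> a = ahat) /\
       (* local maximizers in [0,1] are exactly 0 and ahat *)
       (forall a, 0 <= a <= 1 -> (is_local_max (Bfun h beta k) a <-> a = 0 \/ a = ahat)) /\
       (* global maximizers in [0,1] *)
       (beta_c k h < beta ->
          forall a, 0 <= a <= 1 -> (is_global_max (Bfun h beta k) a <-> a = 0)) /\
       (beta = beta_c k h ->
          forall a, 0 <= a <= 1 -> (is_global_max (Bfun h beta k) a <-> a = 0 \/ a = ahat)) /\
       (beta < beta_c k h ->
          forall a, 0 <= a <= 1 -> (is_global_max (Bfun h beta k) a <-> a = ahat)) /\
       (* k >= 4 even: -ahat mirrors ahat, and is the only such point in [-1,0) *)
       ((4 <= k)%nat -> Nat.Even k ->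
          (is_local_max (Bfun h beta k) ahat -> is_local_max (Bfun h beta k) (- ahat)) /\
          (is_global_max (Bfun h beta k) ahat -> is_global_max (Bfun h beta k) (- ahat)) /\
          (forall a, -1 <= a < 0 -> is_local_max (Bfun h beta k) a -> a = - ahat) /\
          (forall a, -1 <= a < 0 -> is_global_max (Bfun h beta k) a -> a = - ahat)))
  /\
  (* k >= 3 odd: no local maximizers in [-1,0) *)
  ((3 <= k)%nat -> Nat.Odd k ->
     forall a, -1 <= a < 0 -> ~ is_local_max (Bfun h beta k) a).

Proof.
  split. { intros ->. apply case1; auto. }
  split. { intros ->. apply case2a; auto. }
  split. { intros ->. apply case2b; auto. }
  split.
  { intros Hk Hb. assert (Ek : k = ((k - 2) + 2)%nat) by lia. rewrite Ek in Hb |- *.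
    apply case3a; auto. lia. }
  split.
  { intros Hk Hb. assert (Ek : k = ((k - 2) + 2)%nat) by lia. rewrite Ek in Hb |- *.
    apply case3b; auto. lia. }
  { intros Hk Ho. apply odd_case; auto. }
Qed.
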